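(* $\mathrm{EquSLP}\leq_{\mathrm{P}}\mathrm{3SoSSLP}$ (polynomial-time many-one reduction).
   Context: A (division-free, constant-free) SLP computing an integer is a sequence $(b_0,\dots,b_m)$ of integers with $b_0=1$ and $b_i=b_j\circ_i b_k$ for some $j,k<i$, $\circ_i\in\{+,-,\times\}$; it computes $b_m$. $\mathrm{EquSLP}$: given an SLP computing $N\in\mathbb{Z}$, decide whether $N=0$. $\mathrm{3SoSSLP}$: given an SLP computing $N\in\mathbb{Z}$, decide whether $N=a^2+b^2+c^2$ for some integers $a,b,c$. *)

(* Defs.v *)
From HB Require Import structures.
From mathcomp Require Import all_boot all_order all_algebra.
Set Implicit Arguments. Unset Strict Implicit. Unset Printing Implicit Defensive.
Import Order.TTheory GRing.Theory Num.Theory.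
Local Open Scope ring_scope.

(* An SLP (b_0,...,b_m) is given by the list of its m instructions;    *)
(* instruction number i (1-based) computes b_i = b_j op b_k, j,k < i.  *)
Inductive slp_op := OpAdd | OpSub | OpMul.
Record slp_instr := SlpInstr { iop : slp_op; iarg1 : nat; iarg2 : nat }.
Definition SLP := seq slp_instr.

(* well-formedness: the instruction at 0-based position p computes b_(p+1),
   so its arguments must be indices <= p *)
Definition slp_wf (P : SLP) : Prop :=
  forall p, (p < size P)%N ->
    let ins := nth (SlpInstr OpAdd 0 0) P p in
    (iarg1 ins <= p)%N /\ (iarg2 ins <= p)%N.

Definition apply_op (o : slp_op) (x y : int) : int :=
  match o with OpAdd => x + y | OpSub => x - y | OpMul => x * y end.

Definition slp_values (P : SLP) : seq int :=
  foldl (fun vals ins =>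
           rcons vals (apply_op (iop ins) (nth 0 vals (iarg1 ins))
                                          (nth 0 vals (iarg2 ins))))
        [:: 1] P.

Definition slp_value (P : SLP) : int := last 1 (slp_values P).

Definition EquSLP (P : SLP) : Prop := slp_value P = 0.
Definition ThreeSoSSLP (P : SLP) : Prop :=
  exists a b c : int, slp_value P = a ^+ 2 + b ^+ 2 + c ^+ 2.

Fixpoint bits_aux (fuel n : nat) : seq bool :=
  match fuel with
  | 0 => [::]
  | f.+1 => if n is 0 then [::] else odd n :: bits_aux f n./2
  end.
(* binary digits, least significant first; 0 has no digits *)
Definition bits (n : nat) : seq bool := bits_aux n n.
(* self-delimiting: each bit b written as "1 b", terminated by "0" *)
Definition enc_nat (n : nat) : seq bool :=
  flatten [seq [:: true; b] | b <- bits n] ++ [:: false].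
Definition enc_op (o : slp_op) : seq bool :=
  match o with
  | OpAdd => [:: false; false] | OpSub => [:: false; true]
  | OpMul => [:: true; false] end.
Definition enc_instr (ins : slp_instr) : seq bool :=
  enc_op (iop ins) ++ enc_nat (iarg1 ins) ++ enc_nat (iarg2 ins).
Definition enc_slp (P : SLP) : seq bool := flatten (map enc_instr P).

Inductive move := MoveL | MoveR | MoveS.

Record TM := {
  tm_state : finType;
  tm_sym : finType;
  tm_blank : tm_sym;
  tm_inj : bool -> tm_sym;
  tm_start : tm_state;
  tm_halt : tm_state;
  tm_delta : tm_state -> tm_sym -> tm_state * tm_sym * move
}.

(* configuration: state, left part of tape (nearest cell first),
   scanned symbol, right part; all other cells are blank *)
Record config (M : TM) := Config {
  c_state : tm_state M;
  c_left : seq (tm_sym M);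
  c_head : tm_sym M;
  c_right : seq (tm_sym M)
}.

Definition tm_step (M : TM) (c : config M) : config M :=
  let: Config q l h r := c in
  if q == tm_halt M then c else
  let: (q', s, mv) := tm_delta q h in
  match mv with
  | MoveS => Config q' l s r
  | MoveL => Config q' (behead l) (head (tm_blank M) l) (s :: r)
  | MoveR => Config q' (s :: l) (head (tm_blank M) r) (behead r)
  end.

Definition tm_init (M : TM) (x : seq bool) : config M :=
  Config (tm_start M) [::] (head (tm_blank M) (map (tm_inj M) x))
         (behead (map (tm_inj M) x)).

Definition sym_to_bool (M : TM) (s : tm_sym M) : option bool :=
  [pick b : bool | tm_inj M b == s].

Fixpoint read_bits (M : TM) (s : seq (tm_sym M)) : seq bool :=
  match s with
  | [::] => [::]
  | a :: s' => if sym_to_bool a is Some b then b :: read_bits s' else [::]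
  end.

Definition tm_output (M : TM) (c : config M) : seq bool :=
  read_bits (c_head c :: c_right c).

(* M computes f within time p(|x|) for some polynomial p *)
Definition poly_time_computable (f : seq bool -> seq bool) : Prop :=
  exists (M : TM) (k : nat), forall x : seq bool,
    let c := iter (k * (size x).+1 ^ k)%N (@tm_step M) (tm_init M x) in
    c_state c = tm_halt M /\ tm_output c = f x.

Definition slp_poly_reducible (A B : SLP -> Prop) : Prop :=
  exists f : seq bool -> seq bool,
    poly_time_computable f /\
    forall P : SLP, slp_wf P ->
      exists Q : SLP, slp_wf Q /\ f (enc_slp P) = enc_slp Q /\ (A P <-> B Q).

(* Main.v *)
Require Import Defs.
From HB Require Import structures.
From mathcomp Require Import all_boot all_order all_algebra.
Set Implicit Arguments. Unset Strict Implicit. Unset Printing Implicit Defensive.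

Inductive ph := P0 | P1 | P2 | P3.
Inductive dst := Op1 | Op2 | A1 | A1b | A2 | A2b.
Inductive sym := Blank | Bit of bool | Mk of bool | Xm of bool | End.
Inductive st :=
  | GoEndA of ph | Wr of ph & 'I_8 | WrE of ph | RetA of ph | Scan of ph & dst
  | GoEnd of ph | FindMk of ph | Inc of ph | IncBit of ph
  | Ext1 of ph | Ext2 of ph | Ext3 of ph | Back of ph | Clean | Sweep | Halt.

Definition ph_enc (p : ph) : 'I_4 :=
  match p with P0 => @Ordinal 4 0 isT | P1 => @Ordinal 4 1 isT
  | P2 => @Ordinal 4 2 isT | P3 => @Ordinal 4 3 isT end.
Definition ph_dec (i : 'I_4) : ph :=
  match nat_of_ord i with 0 => P0 | 1 => P1 | 2 => P2 | _ => P3 end.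
Lemma ph_K : cancel ph_enc ph_dec. Proof. by case. Qed.
HB.instance Definition _ := Countable.copy ph (can_type ph_K).
HB.instance Definition _ := Finite.copy ph (can_type ph_K).

Definition dst_enc (p : dst) : 'I_6 :=
  match p with Op1 => @Ordinal 6 0 isT | Op2 => @Ordinal 6 1 isT
  | A1 => @Ordinal 6 2 isT | A1b => @Ordinal 6 3 isT
  | A2 => @Ordinal 6 4 isT | A2b => @Ordinal 6 5 isT end.
Definition dst_dec (i : 'I_6) : dst :=
  match nat_of_ord i with 0 => Op1 | 1 => Op2 | 2 => A1 | 3 => A1b | 4 => A2 | _ => A2b end.
Lemma dst_K : cancel dst_enc dst_dec. Proof. by case. Qed.
HB.instance Definition _ := Countable.copy dst (can_type dst_K).
HB.instance Definition _ := Finite.copy dst (can_type dst_K).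

Definition sym_enc (s : sym) : option (bool * 'I_4) :=
  match s with Blank => None | Bit b => Some (b, @Ordinal 4 0 isT)
  | Mk b => Some (b, @Ordinal 4 1 isT) | Xm b => Some (b, @Ordinal 4 2 isT)
  | End => Some (false, @Ordinal 4 3 isT) end.
Definition sym_dec (x : option (bool * 'I_4)) : sym :=
  match x with None => Blank | Some (b, i) =>
    match nat_of_ord i with 0 => Bit b | 1 => Mk b | 2 => Xm b | _ => End end end.
Lemma sym_K : cancel sym_enc sym_dec. Proof. by case. Qed.
HB.instance Definition _ := Countable.copy sym (can_type sym_K).
HB.instance Definition _ := Finite.copy sym (can_type sym_K).

Definition o8 : 'I_8 := @Ordinal 8 0 isT.
Definition st_enc (q : st) : 'I_16 * ph * dst * 'I_8 :=
  match q with
  | GoEndA p => (@Ordinal 16 0 isT, p, Op1, o8)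
  | Wr p i => (@Ordinal 16 1 isT, p, Op1, i)
  | WrE p => (@Ordinal 16 2 isT, p, Op1, o8)
  | RetA p => (@Ordinal 16 3 isT, p, Op1, o8)
  | Scan p d => (@Ordinal 16 4 isT, p, d, o8)
  | GoEnd p => (@Ordinal 16 5 isT, p, Op1, o8)
  | FindMk p => (@Ordinal 16 6 isT, p, Op1, o8)
  | Inc p => (@Ordinal 16 7 isT, p, Op1, o8)
  | IncBit p => (@Ordinal 16 8 isT, p, Op1, o8)
  | Ext1 p => (@Ordinal 16 9 isT, p, Op1, o8)
  | Ext2 p => (@Ordinal 16 10 isT, p, Op1, o8)
  | Ext3 p => (@Ordinal 16 11 isT, p, Op1, o8)
  | Back p => (@Ordinal 16 12 isT, p, Op1, o8)
  | Clean => (@Ordinal 16 13 isT, P0, Op1, o8)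
  | Sweep => (@Ordinal 16 14 isT, P0, Op1, o8)
  | Halt => (@Ordinal 16 15 isT, P0, Op1, o8)
  end.
Definition st_dec (x : 'I_16 * ph * dst * 'I_8) : st :=
  let: (t, p, d, i) := x in
  match nat_of_ord t with
  | 0 => GoEndA p | 1 => Wr p i | 2 => WrE p | 3 => RetA p | 4 => Scan p d
  | 5 => GoEnd p | 6 => FindMk p | 7 => Inc p | 8 => IncBit p | 9 => Ext1 p
  | 10 => Ext2 p | 11 => Ext3 p | 12 => Back p | 13 => Clean | 14 => Sweep
  | _ => Halt end.
Lemma st_K : cancel st_enc st_dec. Proof. by case. Qed.
HB.instance Definition _ := Countable.copy st (can_type st_K).
HB.instance Definition _ := Finite.copy st (can_type st_K).
Check (st : finType).
Check (sym : finType).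
Definition dstep (d : dst) (b : bool) : dst :=
  match d with
  | Op1 => Op2 | Op2 => A1
  | A1 => if b then A1b else A2 | A1b => A1
  | A2 => if b then A2b else Op1 | A2b => A2 end.
Definition dinc (d : dst) (b : bool) : bool := if d is A2 then ~~ b else false.

Definition Wpre (p : ph) : seq sym :=
  match p with
  | P0 => [:: Mk false; Bit true; Bit false; Bit false; Bit true; Bit false]
  | P1 => [::]
  | P2 => [:: Bit false; Bit true]
  | P3 => [::] end.
Definition cinit (p : ph) : nat := match p with P0 => 0 | P1 => 0 | P2 => 1 | P3 => 2 end.
Definition Wa (p : ph) : seq sym :=
  match p with
  | P0 => [:: Mk false; Bit true; Bit false; Bit false; Bit true; Bit false]
  | P1 => [::]
  | P2 => [:: Bit false; Bit true; Mk true; Bit true]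
  | P3 => [:: Mk true; Bit false; Bit true; Bit true] end.
Definition Wb (p : ph) : sym :=
  match p with P0 => Mk false | P1 => Mk false | P2 => Bit false | P3 => Bit false end.
Definition W (p : ph) : seq sym := rcons (Wa p) (Wb p).

Definition ord8 (k : nat) : 'I_8 :=
  match k with
  | 1 => @Ordinal 8 1 isT | 2 => @Ordinal 8 2 isT | 3 => @Ordinal 8 3 isT
  | 4 => @Ordinal 8 4 isT | 5 => @Ordinal 8 5 isT | 6 => @Ordinal 8 6 isT
  | 7 => @Ordinal 8 7 isT | _ => o8 end.
Definition wr (p : ph) (i : nat) : st * sym * move :=
  (if i.+1 < size (W p) then Wr p (ord8 i.+1) else WrE p, nth Blank (W p) i, MoveR).

Definition nextph (p : ph) (b : bool) : st * sym * move :=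
  match p with
  | P0 => (GoEndA P1, Mk b, MoveR)
  | P1 => (GoEndA P2, Mk b, MoveR)
  | P2 => (GoEndA P3, Mk b, MoveR)
  | P3 => (Clean, Bit b, MoveR) end.

Definition delta (q : st) (a : sym) : st * sym * move :=
  match q with
  | GoEndA p => match a with Blank | End => wr p 0 | _ => (GoEndA p, a, MoveR) end
  | Wr p i => wr p i
  | WrE p => (RetA p, End, MoveL)
  | RetA p => match a with Blank => (Scan p Op1, Blank, MoveR) | _ => (RetA p, a, MoveL) end
  | Scan p d => match a with
      | Bit b => if dinc d b then (GoEnd p, Xm b, MoveR) else (Scan p (dstep d b), Bit b, MoveR)
      | Mk b => nextph p b
      | _ => (Halt, a, MoveS) end
  | GoEnd p => match a with End => (FindMk p, End, MoveL) | Blank => (Halt, a, MoveS)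
               | _ => (GoEnd p, a, MoveR) end
  | FindMk p => match a with Mk b => (Inc p, Mk b, MoveS) | _ => (FindMk p, a, MoveL) end
  | Inc p => match a with
      | Bit true => (IncBit p, a, MoveR) | Mk true => (IncBit p, a, MoveR)
      | Bit false => (Ext1 p, Bit true, MoveR) | Mk false => (Ext1 p, Mk true, MoveR)
      | _ => (Halt, a, MoveS) end
  | IncBit p => match a with
      | Bit true => (Inc p, Bit false, MoveR) | Bit false => (Back p, Bit true, MoveL)
      | _ => (Halt, a, MoveS) end
  | Ext1 p => (Ext2 p, Bit true, MoveR)
  | Ext2 p => (Ext3 p, Bit false, MoveR)
  | Ext3 p => (Back p, End, MoveL)
  | Back p => match a with Xm b => (Scan p Op1, Bit b, MoveR) | _ => (Back p, a, MoveL) end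
  | Clean => match a with Mk b => (Clean, Bit b, MoveR) | End => (Sweep, End, MoveL)
             | _ => (Clean, a, MoveR) end
  | Sweep => match a with Blank => (Halt, Blank, MoveR) | _ => (Sweep, a, MoveL) end
  | Halt => (Halt, a, MoveS)
  end.

Definition MM : TM := {| tm_state := st; tm_sym := sym; tm_blank := Blank;
  tm_inj := Bit; tm_start := GoEndA P0; tm_halt := Halt; tm_delta := delta |}.

Definition cfg (q : st) (L T : seq sym) : config MM :=
  @Config MM q L (head Blank T) (behead T).

Definition is_halt (q : st) := if q is Halt then true else false.

Lemma eqHaltE (q : st) : (q == Halt) = is_halt q.
Proof. by case: q => * //=; apply/eqP. Qed.

Lemma stepE q L T : tm_step (cfg q L T) =
  if is_halt q then cfg q L T else
  let: (q', w, mv) := delta q (head Blank T) in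
  match mv with
  | MoveS => cfg q' L (w :: behead T)
  | MoveL => cfg q' (behead L) (head Blank L :: w :: behead T)
  | MoveR => cfg q' (w :: L) (behead T) end.
Proof.
rewrite /tm_step /cfg /=.
have -> : (q == tm_halt MM) = is_halt q by exact: eqHaltE.
by case: (is_halt q); case: (delta q (head Blank T)) => [[q' w] []].
Qed.

Definition reach (c c' : config MM) (t : nat) :=
  exists2 t', t' <= t & iter t' (@tm_step MM) c = c'.

Lemma reach0 c : reach c c 0. Proof. by exists 0. Qed.
Lemma reach_trans c1 c2 c3 t1 t2 :
  reach c1 c2 t1 -> reach c2 c3 t2 -> reach c1 c3 (t1 + t2).
Proof.
move=> [a ha <-] [b hb <-]; exists (b + a); first by rewrite addnC leq_add.
by rewrite iterD.
Qed.
Lemma reach_le c c' t t' : reach c c' t -> t <= t' -> reach c c' t'.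
Proof. by move=> [a ha <-] h; exists a => //; apply: leq_trans h. Qed.
Lemma reach_stepE c c' t : reach (tm_step c) c' t -> reach c c' t.+1.
Proof. by move=> [a ha <-]; exists a.+1 => //; rewrite iterSr. Qed.

Ltac run1 := apply: reach_stepE; rewrite stepE /=.

Lemma headK (T : seq sym) : T != [::] -> head Blank T :: behead T = T.
Proof. by case: T. Qed.

Lemma scanR q (P : pred sym) (g : sym -> sym) :
  is_halt q = false -> (forall a, P a -> delta q a = (q, g a, MoveR)) ->
  forall s L T, all P s ->
  reach (cfg q L (s ++ T)) (cfg q (rev (map g s) ++ L) T) (size s).
Proof.
move=> hq hd; elim=> [|a s IH] L T /=; first by move=> _; apply: reach0.
case/andP=> Pa Ps; run1; rewrite hq hd //=.
by rewrite rev_cons cat_rcons; apply: IH.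
Qed.

Lemma scanL q (P : pred sym) :
  is_halt q = false -> (forall a, P a -> delta q a = (q, a, MoveL)) ->
  forall s L h T, all P (h :: s) ->
  reach (cfg q (rev s ++ L) (h :: T)) (cfg q L (s ++ h :: T)) (size s).
Proof.
move=> hq hd; elim=> [|a s IH] L h T /=; first by move=> _; apply: reach0.
case/and3P=> Ph Pa Ps.
rewrite rev_cons cat_rcons -addn1.
apply: reach_trans; first by apply: IH; rewrite /= Ph.
run1; rewrite hq.
have Hx : P (head Blank (s ++ h :: T)) by clear IH; case: s Ps => //= x s' /andP[].
rewrite hd //= headK //; first exact: reach0.
by rewrite -size_eq0 size_cat /= addnS.
Qed.
From mathcomp Require Import zify.

Lemma half_lt n : 0 < n -> n./2 < n.
Proof. by move=> h; rewrite ltn_half_double -addnn; lia. Qed.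

Lemma bits_aux_eq f1 f2 n : n <= f1 -> n <= f2 -> bits_aux f1 n = bits_aux f2 n.
Proof.
elim: f1 f2 n => [|f IH] [|g] [|n] //= h1 h2.
congr (_ :: _); apply: IH.
- by rewrite -ltnS ?uphalfE; apply: (leq_trans _ h1); apply: half_lt.
- by rewrite -ltnS ?uphalfE; apply: (leq_trans _ h2); apply: half_lt.
Qed.

Lemma bitsE n : bits n = if n is 0 then [::] else odd n :: bits n./2.
Proof.
case: n => [|n] //; rewrite /bits /=; congr (_ :: _); apply: bits_aux_eq => //.
by rewrite -ltnS ?uphalfE; apply: half_lt.
Qed.

Fixpoint inc (s : seq bool) : seq bool :=
  match s with [::] => [:: true] | false :: s' => true :: s' | true :: s' => false :: inc s' end.

Lemma bitsS k : 0 < k -> bits k = odd k :: bits k./2.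
Proof. by case: k => // k _; rewrite bitsE. Qed.

Lemma bits_inc n : bits n.+1 = inc (bits n).
Proof.
elim/ltn_ind: n => n IH.
case: n IH => [|n] IH; first by [].
rewrite (@bitsS n.+2) // (@bitsS n.+1) //.
have E : n.+2./2 = odd n.+1 + n.+1./2 by rewrite -uphalf_half uphalfE.
have O : odd n.+2 = ~~ odd n.+1 by [].
rewrite E O; case: (odd n.+1) => /=.
- by rewrite add1n (IH (n.+1./2)) // half_lt.
- by rewrite add0n.
Qed.

Lemma size_bits_aux f n : size (bits_aux f n) <= f.
Proof. by elim: f n => [|f IH] [|n] //=; rewrite ltnS. Qed.
Lemma size_bits n : size (bits n) <= n.
Proof. exact: size_bits_aux. Qed.
Lemma size_inc s : size (inc s) <= (size s).+1.
Proof. by elim: s => [|[] s IH] //=. Qed.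

Definition enc_bits (s : seq bool) : seq bool :=
  flatten [seq [:: true; b] | b <- s] ++ [:: false].
Lemma enc_bitsE n : enc_nat n = enc_bits (bits n). Proof. by []. Qed.
Lemma size_enc_bits s : size (enc_bits s) = (size s).*2.+1.
Proof. by elim: s => [|b s IH] //=; rewrite IH doubleS. Qed.

Definition cell (f b : bool) : sym := if f then Mk b else Bit b.
Definition cellsB (f : bool) (l : seq bool) : seq sym :=
  if l is b :: l' then cell f b :: map Bit l' else [::].
Lemma cellsB_false l : cellsB false l = map Bit l. Proof. by case: l. Qed.
Lemma size_cellsB f l : size (cellsB f l) = size l. Proof. by case: l => //= b l; rewrite size_map. Qed.
Definition ctr (c : nat) : seq sym := cellsB true (enc_bits (bits c)).
Lemma size_ctr c : size (ctr c) <= c.*2.+1.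
Proof. by rewrite size_cellsB size_enc_bits ltnS leq_double size_bits. Qed.

Definition passB (a : sym) : bool := match a with Bit _ | Mk _ => true | _ => false end.
Lemma all_passB_cellsB f l : all passB (cellsB f l).
Proof. by case: l => //= b l; rewrite /cell; case: f => /=; elim: l. Qed.
Lemma all_passB_map l : all passB (map Bit l). Proof. by elim: l. Qed.

Lemma inc_run p s f R : exists u h v,
  [/\ u ++ h :: v = cellsB f (enc_bits (inc s)), all passB (h :: u) &
  reach (cfg (Inc p) R (cellsB f (enc_bits s) ++ [:: End]))
        (cfg (Back p) (rev u ++ R) (h :: v ++ [:: End])) ((size s).*2 + 4)].
Proof.
elim: s f R => [|b s IH] f R.
- exists [:: cell f true; Bit true], (Bit false), [::]; split => //.
  + by case: f.
  + by case: f; do 4! run1; exact: reach0.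
- case: b.
  + have [u [h [v [E1 E2 E3]]]] := IH false [:: Bit false, cell f true & R].
    exists [:: cell f true, Bit false & u], h, v; split.
    * by rewrite /= E1 cellsB_false.
    * by move: E2 => /= /andP[-> ->]; clear E1 E3; case: f.
    * rewrite doubleS !addSn.
      have H : reach (cfg (Inc p) R (cellsB f (enc_bits (true :: s)) ++ [:: End]))
                     (cfg (Inc p) [:: Bit false, cell f true & R]
                        (cellsB false (enc_bits s) ++ [:: End])) 2.
        by clear E1 E2 E3; rewrite cellsB_false; case: f; do 2! run1; exact: reach0.
      have -> : rev [:: cell f true, Bit false & u] ++ R = rev u ++ [:: Bit false, cell f true & R].
        by rewrite !rev_cons -!cats1 -!catA.
      apply: reach_le; first exact: (reach_trans H E3).
      by rewrite addnC addn2.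
  + exists [::], (cell f true), (Bit true :: map Bit (enc_bits s)); split => //.
    * by case: f.
    * apply: reach_le (_ : 2 <= _) => //.
      by case: f; do 2! run1; exact: reach0.
Qed.
Lemma stepR q a T L q' w : is_halt q = false -> delta q a = (q', w, MoveR) ->
  reach (cfg q L (a :: T)) (cfg q' (w :: L) T) 1.
Proof.
move=> h1 h2; apply: reach_stepE; rewrite stepE h1.
have -> : head Blank (a :: T) = a by []. by rewrite h2; apply: reach0.
Qed.
Lemma stepL1 q (P : pred sym) L X : is_halt q = false ->
  (forall a, P a -> delta q a = (q, a, MoveL)) -> P (head Blank X) -> X != [::] ->
  reach (cfg q L X) (cfg q (behead L) (head Blank L :: X)) 1.
Proof.
move=> h1 h2 h3 h4; apply: reach_stepE; rewrite stepE h1 h2 // headK //; exact: reach0.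
Qed.

Lemma scanL' q (P : pred sym) :
  is_halt q = false -> (forall a, P a -> delta q a = (q, a, MoveL)) ->
  forall s a L h T, all P (h :: s) ->
  reach (cfg q (rev s ++ a :: L) (h :: T)) (cfg q L (a :: s ++ h :: T)) (size s).+1.
Proof.
move=> hq hd s a L h T Ps; rewrite -addn1.
apply: reach_trans; first exact: (scanL hq hd).
apply: (stepL1 (P := P)) => //.
- by case: s Ps => [/andP[]|x s' /and3P[]].
- by rewrite -size_eq0 size_cat /= addnS.
Qed.

Definition isBit (a : sym) := if a is Bit _ then true else false.

Lemma findmk p c0 cs R :
  reach (cfg (GoEnd p) (rev (Mk c0 :: map Bit cs) ++ R) [:: End])
        (cfg (Inc p) R (Mk c0 :: map Bit cs ++ [:: End])) (size cs + 2).
Proof.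
case/lastP: cs => [|cs bl].
- by run1; run1; exact: reach0.
have -> : rev (Mk c0 :: map Bit (rcons cs bl)) ++ R = Bit bl :: (rev (map Bit cs) ++ Mk c0 :: R).
  by rewrite map_rcons rev_cons rev_rcons /= cat_rcons.
rewrite size_rcons.
have H1 : reach (cfg (GoEnd p) (Bit bl :: (rev (map Bit cs) ++ Mk c0 :: R)) [:: End])
   (cfg (FindMk p) (rev (map Bit cs) ++ Mk c0 :: R) [:: Bit bl; End]) 1.
  by run1; exact: reach0.
have H2 := @scanL' (FindMk p) isBit erefl _ (map Bit cs) (Mk c0) R (Bit bl) [:: End].
have H3 : reach (cfg (FindMk p) R (Mk c0 :: map Bit cs ++ [:: Bit bl; End]))
   (cfg (Inc p) R (Mk c0 :: map Bit cs ++ [:: Bit bl; End])) 1.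
  by run1; exact: reach0.
rewrite map_rcons -cats1 -catA /=.
apply: reach_le; first apply: (reach_trans H1 (reach_trans (H2 _ _) H3)).
- by case => // b _.
- by rewrite /=; elim: cs {H1 H2 H3}.
- by rewrite size_map; lia.
Qed.
Lemma ctr_split c : exists c0 cs, ctr c = Mk c0 :: map Bit cs /\ size cs = (size (bits c)).*2.
Proof.
rewrite /ctr; case: (bits c) => [|b s]; first by exists false, [::].
by exists true, (b :: enc_bits s); rewrite /= size_enc_bits.
Qed.

Lemma ctrS c : ctr c.+1 = cellsB true (enc_bits (inc (bits c))).
Proof. by rewrite /ctr bits_inc. Qed.

Lemma size_inc_enc s : size (cellsB true (enc_bits (inc s))) <= (size s).*2.+3.
Proof. by rewrite size_cellsB size_enc_bits !ltnS -doubleS leq_double size_inc. Qed.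

Lemma passGoEnd p a : passB a -> delta (GoEnd p) a = (GoEnd p, a, MoveR).
Proof. by case: a. Qed.
Lemma passBack p a : passB a -> delta (Back p) a = (Back p, a, MoveL).
Proof. by case: a. Qed.

Lemma trip p xs Pre c L : all passB Pre ->
  reach (cfg (Scan p A2) L (Bit false :: map Bit xs ++ Pre ++ ctr c ++ [:: End]))
        (cfg (Scan p Op1) (Bit false :: L) (map Bit xs ++ Pre ++ ctr c.+1 ++ [:: End]))
        ((size xs + size Pre).*2 + (size (bits c)) * 8 + 20).
Proof.
move=> hP.
have [c0 [cs [Ec Ecs]]] := ctr_split c.
have hS : all passB (map Bit xs ++ Pre) by rewrite all_cat all_passB_map hP.
have hall : all passB ((map Bit xs ++ Pre) ++ ctr c).
  by rewrite all_cat hS /ctr all_passB_cellsB.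
have hsz : size (map Bit xs ++ Pre) = size xs + size Pre by rewrite size_cat size_map.
rewrite !catA.
move: (map Bit xs ++ Pre) hS hall hsz => S hS hall hsz.
have H1 : reach (cfg (Scan p A2) L (Bit false :: (S ++ ctr c) ++ [:: End]))
   (cfg (GoEnd p) (Xm false :: L) ((S ++ ctr c) ++ [:: End])) 1.
  by run1; exact: reach0.
have H2 : reach (cfg (GoEnd p) (Xm false :: L) ((S ++ ctr c) ++ [:: End]))
  (cfg (GoEnd p) (rev (ctr c) ++ (rev S ++ Xm false :: L)) [:: End]) (size (S ++ ctr c)).
  have := @scanR (GoEnd p) passB id erefl (@passGoEnd p) (S ++ ctr c) (Xm false :: L) [:: End].
  move/(_ hall); rewrite map_id rev_cat -!catA => H; rewrite -?catA; exact: H.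
have H3 : reach (cfg (GoEnd p) (rev (ctr c) ++ (rev S ++ Xm false :: L)) [:: End])
   (cfg (Inc p) (rev S ++ Xm false :: L) (ctr c ++ [:: End])) (size cs + 2).
  by rewrite Ec; exact: findmk.
have [u [h [v [E1 E2 E3]]]] := inc_run p (bits c) true (rev S ++ Xm false :: L).
change (cellsB true (enc_bits (bits c))) with (ctr c) in E3.
have H4 : reach (cfg (Back p) (rev u ++ (rev S ++ Xm false :: L)) (h :: v ++ [:: End]))
   (cfg (Back p) L (Xm false :: (S ++ u) ++ h :: v ++ [:: End])) (size (S ++ u)).+1.
  have := @scanL' (Back p) passB erefl (@passBack p) (S ++ u) (Xm false) L h (v ++ [:: End]).
  have hh : all passB (h :: S ++ u).
    by move: E2 hS; rewrite /= all_cat => /andP[-> ->] ->.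
  move/(_ hh); rewrite rev_cat -!catA => H; rewrite -?catA; exact: H.
have H5 : reach (cfg (Back p) L (Xm false :: (S ++ u) ++ h :: v ++ [:: End]))
   (cfg (Scan p Op1) (Bit false :: L) ((S ++ u) ++ h :: v ++ [:: End])) 1.
  by run1; exact: reach0.
have := reach_trans H1 (reach_trans H2 (reach_trans H3 (reach_trans E3 (reach_trans H4 H5)))).
have eT : (S ++ u) ++ h :: v ++ [:: End] = (S ++ ctr c.+1) ++ [:: End].
  by rewrite ctrS -E1 -!catA.
rewrite eT => H; apply: (reach_le H).
have := size_inc_enc (bits c); rewrite -E1 size_cat /=.
have := size_ctr c; rewrite Ec /= size_map Ecs.
rewrite !size_cat /= size_map Ecs hsz -!addnn; lia.
Qed.
Fixpoint dcnt (d : dst) (xs : seq bool) : nat :=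
  if xs is b :: xs' then dinc d b + dcnt (dstep d b) xs' else 0.
Fixpoint dfin (d : dst) (xs : seq bool) : dst :=
  if xs is b :: xs' then dfin (dstep d b) xs' else d.

Lemma dcnt_le d xs : dcnt d xs <= size xs.
Proof. by elim: xs d => [|b xs IH] d //=; case: (dinc d b); rewrite ?add0n ?add1n ?ltnS // leqW. Qed.

Definition cntB (n P c : nat) := n * ((n + P).*2 + 8 * (c + n) + 21).

Lemma count_run p Pre : all passB Pre -> forall xs d c L,
  reach (cfg (Scan p d) L (map Bit xs ++ Pre ++ ctr c ++ [:: End]))
        (cfg (Scan p (dfin d xs)) (rev (map Bit xs) ++ L) (Pre ++ ctr (c + dcnt d xs) ++ [:: End]))
        (cntB (size xs) (size Pre) c).
Proof.
move=> hP; elim=> [|b xs IH] d c L /=; first by rewrite addn0; exact: reach0.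
rewrite rev_cons cat_rcons.
case Hi: (dinc d b).
- have [-> ->] : d = A2 /\ b = false by case: d Hi; case: b.
  have := reach_trans (trip p xs c L hP) (IH Op1 c.+1 (Bit false :: L)).
  rewrite addSnnS => H; apply: (reach_le H).
  have := size_bits c; have := dcnt_le d xs.
  rewrite /cntB /= -!addnn; nia.
- have H1 : reach (cfg (Scan p d) L (Bit b :: map Bit xs ++ Pre ++ ctr c ++ [:: End]))
     (cfg (Scan p (dstep d b)) (Bit b :: L) (map Bit xs ++ Pre ++ ctr c ++ [:: End])) 1.
    by apply: stepR => //=; rewrite Hi.
  have := reach_trans H1 (IH (dstep d b) c (Bit b :: L)).
  rewrite add0n => H; apply: (reach_le H).
  rewrite /cntB /= -!addnn; nia.
Qed.
Lemma write_W p L T : T = [::] \/ T = [:: End] ->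
  reach (cfg (GoEndA p) L T) (cfg (RetA p) (rev (Wa p) ++ L) [:: Wb p; End]) 8.
Proof.
case=> ->; case: p.
- by do 8! run1; exact: reach0.
- by apply: (@reach_le _ _ 2) => //; do 2! run1; exact: reach0.
- by apply: (@reach_le _ _ 6) => //; do 6! run1; exact: reach0.
- by apply: (@reach_le _ _ 6) => //; do 6! run1; exact: reach0.
- by do 8! run1; exact: reach0.
- by apply: (@reach_le _ _ 2) => //; do 2! run1; exact: reach0.
- by apply: (@reach_le _ _ 6) => //; do 6! run1; exact: reach0.
- by apply: (@reach_le _ _ 6) => //; do 6! run1; exact: reach0.
Qed.

Lemma retL q q' : is_halt q = false -> (forall a, passB a -> delta q a = (q, a, MoveL)) ->
  delta q Blank = (q', Blank, MoveR) ->
  forall s h T lz, all passB (h :: s) -> (lz = [::] \/ lz = [:: Blank]) ->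
  reach (cfg q (rev s ++ lz) (h :: T)) (cfg q' [:: Blank] (s ++ h :: T)) (size s + 2).
Proof.
move=> hq hp hb s h T lz hs [] ->.
- have H1 := @scanL q passB hq hp s [::] h T hs.
  have H2 : reach (cfg q [::] (s ++ h :: T)) (cfg q' [:: Blank] (s ++ h :: T)) 2.
    apply: reach_stepE; rewrite stepE hq /= hp; last by case: s hs {H1} => [/andP[]|x s' /and3P[]].
    rewrite headK; last by rewrite -size_eq0 size_cat /= addnS.
    apply: reach_stepE; rewrite stepE hq /= hb; exact: reach0.
  exact: reach_trans H1 H2.
- rewrite addn2 -addn1.
  apply: reach_trans; first exact: (scanL' hq hp).
  apply: reach_stepE; rewrite stepE hq /= hb; exact: reach0.
Qed.

Lemma passRetA p a : passB a -> delta (RetA p) a = (RetA p, a, MoveL). Proof. by case: a. Qed.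
Lemma passSweep a : passB a -> delta Sweep a = (Sweep, a, MoveL). Proof. by case: a. Qed.
Lemma passGoEndA p a : passB a -> delta (GoEndA p) a = (GoEndA p, a, MoveR). Proof. by case: a. Qed.
Definition unmark (a : sym) := match a with Mk b => Bit b | _ => a end.
Lemma passClean a : passB a -> delta Clean a = (Clean, unmark a, MoveR). Proof. by case: a. Qed.

Lemma W_split p : rcons (Wa p) (Wb p) = Wpre p ++ ctr (cinit p). Proof. by case: p. Qed.
Lemma passW p : all passB (Wb p :: Wa p). Proof. by case: p. Qed.

Lemma phase p p' b0 Pre' c x : nextph p b0 = (GoEndA p', Mk b0, MoveR) -> all passB Pre' ->
  reach (cfg (Scan p Op1) [:: Blank] (map Bit x ++ (Mk b0 :: Pre') ++ ctr c ++ [:: End]))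
    (cfg (Scan p' Op1) [:: Blank]
      (map Bit x ++ (Mk b0 :: Pre' ++ ctr (c + dcnt Op1 x) ++ Wpre p') ++ ctr (cinit p') ++ [:: End]))
    (cntB (size x) (size Pre').+1 c + ((size x + size Pre' + size (ctr (c + dcnt Op1 x))) + 20).*2).
Proof.
move=> hn hP.
set c' := c + dcnt Op1 x.
have hP1 : all passB (Mk b0 :: Pre') by [].
have H1 := count_run p hP1 x Op1 c [:: Blank].
have H2 : reach (cfg (Scan p (dfin Op1 x)) (rev (map Bit x) ++ [:: Blank])
                  ((Mk b0 :: Pre') ++ ctr c' ++ [:: End]))
                (cfg (GoEndA p') (Mk b0 :: rev (map Bit x) ++ [:: Blank]) (Pre' ++ ctr c' ++ [:: End])) 1.
  exact: stepR.
have hY : all passB (Pre' ++ ctr c') by rewrite all_cat hP all_passB_cellsB.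
have H3 := @scanR (GoEndA p') passB id erefl (@passGoEndA p') (Pre' ++ ctr c')
   (Mk b0 :: rev (map Bit x) ++ [:: Blank]) [:: End] hY.
rewrite map_id -catA in H3.
have H4 := write_W p' (rev (Pre' ++ ctr c') ++ Mk b0 :: rev (map Bit x) ++ [:: Blank]) (or_intror erefl).
set s := map Bit x ++ Mk b0 :: Pre' ++ ctr c' ++ Wa p'.
have hs : all passB (Wb p' :: s).
  move: (passW p') => /andP[hb hw].
  rewrite /s /= hb !all_cat all_passB_map /= !all_cat hP all_passB_cellsB /=.
  by case: (p') hw.
have H5 := @retL (RetA p') (Scan p' Op1) erefl (@passRetA p') erefl s (Wb p') [:: End] [:: Blank] hs (or_intror erefl).
have e : rev s ++ [:: Blank] = rev (Wa p') ++ (rev (Pre' ++ ctr c') ++ Mk b0 :: rev (map Bit x) ++ [:: Blank]).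
  by rewrite /s !(rev_cat, rev_cons) -!cats1 -!catA.
rewrite e in H5.
have := reach_trans H1 (reach_trans H2 (reach_trans H3 (reach_trans H4 H5))).
have e2 : s ++ [:: Wb p'; End] = map Bit x ++ (Mk b0 :: Pre' ++ ctr c' ++ Wpre p') ++ ctr (cinit p') ++ [:: End].
  have wsp : forall Z, Wa p' ++ Wb p' :: Z = Wpre p' ++ ctr (cinit p') ++ Z by case: (p').
  by rewrite /s -!catA /= -!catA wsp.
rewrite e2 => H; apply: (reach_le H).
rewrite /s !size_cat /= size_map.
have : size (Wa p') <= 7 by case: (p').
rewrite !size_cat -!addnn; lia.
Qed.
Lemma final b0 Pre' c x : all passB Pre' ->
  reach (cfg (Scan P3 Op1) [:: Blank] (map Bit x ++ (Mk b0 :: Pre') ++ ctr c ++ [:: End]))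
    (cfg Halt [:: Blank] ((map Bit x ++ Bit b0 :: map unmark (Pre' ++ ctr (c + dcnt Op1 x))) ++ [:: End]))
    (cntB (size x) (size Pre').+1 c + ((size x + size Pre' + size (ctr (c + dcnt Op1 x))) + 10).*2).
Proof.
move=> hP.
set c' := c + dcnt Op1 x.
have hP1 : all passB (Mk b0 :: Pre') by [].
have H1 := count_run P3 hP1 x Op1 c [:: Blank].
have H2 : reach (cfg (Scan P3 (dfin Op1 x)) (rev (map Bit x) ++ [:: Blank])
                  ((Mk b0 :: Pre') ++ ctr c' ++ [:: End]))
                (cfg Clean (Bit b0 :: rev (map Bit x) ++ [:: Blank]) (Pre' ++ ctr c' ++ [:: End])) 1.
  exact: stepR.
set Y := Pre' ++ ctr c'.
have hY : all passB Y by rewrite all_cat hP all_passB_cellsB.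
have H3 := @scanR Clean passB unmark erefl passClean Y
   (Bit b0 :: rev (map Bit x) ++ [:: Blank]) [:: End] hY.
rewrite -catA in H3.
set Z := map Bit x ++ Bit b0 :: map unmark Y.
have e : rev (map unmark Y) ++ Bit b0 :: rev (map Bit x) ++ [:: Blank] = rev Z ++ [:: Blank].
  by rewrite /Z !(rev_cat, rev_cons) -!cats1 -!catA.
rewrite e in H3.
have hZ : all passB Z.
  rewrite /Z all_cat all_passB_map /= all_map; apply: sub_all hY; by case.
have nZ : Z != [::] by rewrite /Z; case: (x).
have [Z' [zl EZ]] : exists Z' zl, Z = rcons Z' zl.
  by move: nZ; case/lastP: (Z) => // Z' zl _; exists Z', zl.
have H4 : reach (cfg Clean (rev Z ++ [:: Blank]) [:: End]) (cfg Sweep (rev Z' ++ [:: Blank]) [:: zl; End]) 1.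
  by rewrite EZ rev_rcons; run1; exact: reach0.
have hZ' : all passB (zl :: Z') by move: hZ; rewrite EZ all_rcons.
have H5 := @retL Sweep Halt erefl passSweep erefl Z' zl [:: End] [:: Blank] hZ' (or_intror erefl).
have := reach_trans H1 (reach_trans H2 (reach_trans H3 (reach_trans H4 H5))).
rewrite EZ cat_rcons => H; apply: (reach_le H).
have : size Z = (size Z').+1 by rewrite EZ size_rcons.
rewrite /Z /Y !size_cat /= !size_map !size_cat -!addnn; lia.
Qed.
Lemma unmark_cellsB f l : map unmark (cellsB f l) = map Bit l.
Proof. by case: l => //= b l; rewrite -map_comp; case: f. Qed.
Lemma unmark_map l : map unmark (map Bit l) = map Bit l.
Proof. by rewrite -map_comp. Qed.

Definition Ssfx (m : nat) : SLP :=
  [:: SlpInstr OpSub 0 0; SlpInstr OpMul m m; SlpInstr OpSub m.+1 m.+2].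

Lemma enc_Ssfx m : enc_slp (Ssfx m) = [:: false; true; false; false; true; false] ++
  enc_nat m ++ enc_nat m ++ [:: false; true] ++ enc_nat m.+1 ++ enc_nat m.+2.
Proof. by rewrite /enc_slp /= /enc_instr /= -!catA cats0. Qed.

Definition Pre0' := [:: Bit true; Bit false; Bit false; Bit true; Bit false].

Lemma init_cfg x : tm_init MM x = cfg (GoEndA P0) [::] (map Bit x).
Proof. by []. Qed.

Definition Bnd (n : nat) := 1000 * n.+1 ^ 2.

Lemma run x : reach (tm_init MM x)
  (cfg Halt [:: Blank] (map Bit (x ++ enc_slp (Ssfx (dcnt Op1 x))) ++ [:: End])) (Bnd (size x)).
Proof.
set m := dcnt Op1 x.
rewrite init_cfg.
have Ha := @scanR (GoEndA P0) passB id erefl (@passGoEndA P0) (map Bit x) [::] [::] (all_passB_map x).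
rewrite cats0 map_id in Ha.
have Hb := write_W P0 (rev (map Bit x) ++ [::]) (or_introl erefl).
have hs : all passB (Wb P0 :: map Bit x ++ Wa P0) by rewrite /= all_cat all_passB_map.
have Hc : reach (cfg (RetA P0) (rev (Wa P0) ++ rev (map Bit x) ++ [::]) [:: Wb P0; End])
   (cfg (Scan P0 Op1) [:: Blank] (map Bit x ++ (Mk false :: Pre0') ++ ctr 0 ++ [:: End]))
   (size (map Bit x ++ Wa P0) + 2).
  have := @retL (RetA P0) (Scan P0 Op1) erefl (@passRetA P0) erefl (map Bit x ++ Wa P0) (Wb P0) [:: End] [::] hs (or_introl erefl).
  by rewrite rev_cat -!catA.
have Hd := @phase P0 P1 false Pre0' 0 x erefl erefl.
set Pre1 := Pre0' ++ ctr (0 + m) ++ Wpre P1.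
have hP1 : all passB Pre1 by rewrite /Pre1 !all_cat all_passB_cellsB.
have He := @phase P1 P2 false Pre1 (cinit P1) x erefl hP1.
set Pre2 := Pre1 ++ ctr (cinit P1 + m) ++ Wpre P2.
have hP2 : all passB Pre2 by rewrite /Pre2 all_cat hP1 all_cat all_passB_cellsB.
have Hf := @phase P2 P3 false Pre2 (cinit P2) x erefl hP2.
set Pre3 := Pre2 ++ ctr (cinit P2 + m) ++ Wpre P3.
have hP3 : all passB Pre3 by rewrite /Pre3 all_cat hP2 all_cat all_passB_cellsB.
have Hg := @final false Pre3 (cinit P3) x hP3.
have := reach_trans Ha (reach_trans Hb (reach_trans Hc (reach_trans Hd (reach_trans He (reach_trans Hf Hg))))).
have eF : map Bit x ++ Bit false :: map unmark (Pre3 ++ ctr (cinit P3 + m)) =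
          map Bit (x ++ enc_slp (Ssfx m)).
  rewrite enc_Ssfx [RHS]map_cat; congr (_ ++ _).
  rewrite /Pre3 /Pre2 /Pre1 !map_cat !unmark_cellsB /cinit add0n add1n add2n !map_cat -!catA.
  by [].
rewrite eF => H; apply: (reach_le H).
have hm : m <= size x := dcnt_le Op1 x.
have h0 := size_ctr (0 + m); have h1 := size_ctr (1 + m); have h2 := size_ctr (2 + m).
rewrite /Pre3 /Pre2 /Pre1 /cinit !size_cat.
move: (size (ctr (0 + m))) (size (ctr (1 + m))) (size (ctr (2 + m))) h0 h1 h2 => s0 s1 s2 h0 h1 h2.
rewrite /Bnd /cntB /= size_map.
move: (size x) hm => n hm.
rewrite -!addnn in h0 h1 h2 *.
nia.
Qed.
Lemma iter_halt k L T : iter k (@tm_step MM) (cfg Halt L T) = cfg Halt L T.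
Proof. by elim: k => //= k ->; rewrite stepE. Qed.

Definition finalc (x : seq bool) :=
  cfg Halt [:: Blank] (map Bit (x ++ enc_slp (Ssfx (dcnt Op1 x))) ++ [:: End]).

Definition Kc := 1000.

Lemma Bnd_le n : Bnd n <= Kc * n.+1 ^ Kc.
Proof. by rewrite /Bnd /Kc leq_mul2l leq_pexp2l. Qed.

Lemma iter_final x : iter (Kc * (size x).+1 ^ Kc) (@tm_step MM) (tm_init MM x) = finalc x.
Proof.
have [t ht Ht] := run x.
have hK := leq_trans ht (Bnd_le (size x)).
by rewrite -(subnK hK) iterD Ht /finalc iter_halt.
Qed.

Lemma sym_to_bool_Bit b : sym_to_bool (M := MM) (Bit b) = Some b.
Proof.
rewrite /sym_to_bool; case: pickP => [b' /eqP [->] // | /(_ b)].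
by rewrite /= eqxx.
Qed.
Lemma sym_to_bool_End : sym_to_bool (M := MM) End = None.
Proof. by rewrite /sym_to_bool; case: pickP => [b' /eqP | ]. Qed.

Lemma read_bits_map y : read_bits (M := MM) (map Bit y ++ [:: End]) = y.
Proof.
elim: y => [|b y IH] /=; first by rewrite sym_to_bool_End.
by rewrite sym_to_bool_Bit IH.
Qed.

Lemma output_final x : tm_output (finalc x) = x ++ enc_slp (Ssfx (dcnt Op1 x)).
Proof.
have E : forall q L T, tm_output (cfg q L T) = read_bits (M := MM) (head Blank T :: behead T) by [].
rewrite /finalc E headK; first exact: read_bits_map.
by rewrite -size_eq0 size_cat addn1.
Qed.
Lemma dcnt_cat d xs ys : dcnt d (xs ++ ys) = dcnt d xs + dcnt (dfin d xs) ys.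
Proof. by elim: xs d => [|b xs IH] d //=; rewrite IH addnA. Qed.
Lemma dfin_cat d xs ys : dfin d (xs ++ ys) = dfin (dfin d xs) ys.
Proof. by elim: xs d => [|b xs IH] d //=. Qed.

Lemma pairs_A1 bs : dfin A1 (enc_bits bs) = A2 /\ dcnt A1 (enc_bits bs) = 0.
Proof. by elim: bs => [|b bs IH] //=; case: b. Qed.
Lemma pairs_A2 bs : dfin A2 (enc_bits bs) = Op1 /\ dcnt A2 (enc_bits bs) = 1.
Proof. by elim: bs => [|b bs IH] //=; case: b. Qed.

Lemma instr_run i : dfin Op1 (enc_instr i) = Op1 /\ dcnt Op1 (enc_instr i) = 1.
Proof.
case: i => o a b.
change (enc_instr (SlpInstr o a b)) with (enc_op o ++ enc_bits (bits a) ++ enc_bits (bits b)).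
have [h1 h2] := pairs_A1 (bits a); have [h3 h4] := pairs_A2 (bits b).
have ho : dfin Op1 (enc_op o) = A1 /\ dcnt Op1 (enc_op o) = 0 by case: o.
case: ho => h5 h6.
move: (enc_bits (bits a)) (enc_bits (bits b)) h1 h2 h3 h4 => A B h1 h2 h3 h4.
by rewrite !dfin_cat !dcnt_cat h5 h6 h1 h2 h3 h4.
Qed.

Lemma slp_run P : dfin Op1 (enc_slp P) = Op1 /\ dcnt Op1 (enc_slp P) = size P.
Proof.
elim: P => [|i P [IH1 IH2]] //=.
have [h1 h2] := instr_run i.
by rewrite /enc_slp /= -/(enc_slp P) dfin_cat dcnt_cat h1 h2 IH1 IH2.
Qed.

Lemma enc_slp_cat P Q : enc_slp (P ++ Q) = enc_slp P ++ enc_slp Q.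
Proof. by rewrite /enc_slp map_cat flatten_cat. Qed.

Definition Fv (vals : seq int) (ins : slp_instr) : seq int :=
  rcons vals (apply_op (iop ins) (nth 0%R vals (iarg1 ins)) (nth 0%R vals (iarg2 ins))).

Lemma foldl_prefix vals P : exists r, foldl Fv vals P = vals ++ r /\ size r = size P.
Proof.
elim: P vals => [|i P IH] vals /=; first by exists [::]; rewrite cats0.
have [r [E S]] := IH (Fv vals i).
by exists (rcons [::] (apply_op (iop i) (nth 0%R vals (iarg1 i)) (nth 0%R vals (iarg2 i))) ++ r);
  rewrite E /Fv -cats1 catA /= S.
Qed.

Lemma value_Q P : slp_value (P ++ Ssfx (size P)) = (- (slp_value P * slp_value P))%R.
Proof.
rewrite /slp_value /slp_values -/Fv foldl_cat.
have [r [E S]] := foldl_prefix [:: 1%R] P.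
have hs : size (foldl Fv [:: 1%R] P) = (size P).+1 by rewrite E size_cat S.
have h0 : nth 0%R (foldl Fv [:: 1%R] P) 0 = 1%R by rewrite E.
move: (foldl Fv [:: 1%R] P) hs h0 => V hs h0.
have hN : last 1%R V = nth 0%R V (size P).
  by rewrite -(nth_last 1%R) hs /=; apply: set_nth_default; rewrite hs.
rewrite hN /= /Fv /=.
rewrite last_rcons !nth_rcons !size_rcons hs !ltnSn !ltnn !eqxx /=.
by rewrite h0 GRing.subrr GRing.sub0r.
Qed.
Lemma wf_Q P : slp_wf P -> slp_wf (P ++ Ssfx (size P)).
Proof.
move=> hw p; rewrite size_cat /= => hp.
rewrite nth_cat; case: ifP => h; first exact: hw.
have [k Ek] : exists k, p = size P + k by exists (p - size P); lia.
have hk : k < 3 by lia.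
rewrite Ek addKn.
by case: k hk Ek => [|[|[|k]]] //= _ _; lia.
Qed.

Import Order.TTheory GRing.Theory Num.Theory.

Lemma sos_neg (N a b c : int) :
  (- (N * N) = a ^+ 2 + b ^+ 2 + c ^+ 2)%R -> N = 0%R.
Proof.
move=> h.
have h1 : (0 <= a ^+ 2 + b ^+ 2 + c ^+ 2)%R by rewrite !addr_ge0 ?sqr_ge0.
rewrite -h oppr_ge0 in h1.
have : (N * N == 0)%R by rewrite eq_le h1 -expr2 sqr_ge0.
by rewrite mulf_eq0 orbb => /eqP.
Qed.

Theorem mainTheorem9 : slp_poly_reducible EquSLP ThreeSoSSLP.
Proof.
exists (fun x => tm_output (iter (Kc * (size x).+1 ^ Kc) (@tm_step MM) (tm_init MM x))).
split.
- exists MM, Kc => x; cbv zeta; split; last exact: erefl.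
  rewrite iter_final; exact: erefl.
- move=> P hw; exists (P ++ Ssfx (size P)); split; first exact: wf_Q.
  split.
  + rewrite iter_final output_final enc_slp_cat.
    by have [_ ->] := slp_run P.
  + rewrite /EquSLP /ThreeSoSSLP value_Q; split.
    * by move=> ->; exists 0%R, 0%R, 0%R.
    * by case=> a [b [c h]]; exact: sos_neg h.
Qed.
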